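(* Let $n,k,t$ be positive integers with $k>t>0$, $n>2k-t$ and $n<(t+1)(k+1-t)$. Then $$\operatorname{tw}(K(n,k,t))< \binom{n}{k}-\binom{n-t}{k-t}-1.$$
   Context: For integers $k>t\ge 1$ and $n>2k-t$, the generalized Kneser graph $K(n,k,t)$ is the graph whose vertices are the $k$-element subsets of $[n]=\{1,\dots,n\}$, two vertices $K,K'$ being adjacent if and only if $|K\cap K'|<t$. A tree decomposition of a graph $\Gamma$ is a pair $(T,(B_x)_{x\in V(T)})$ where $T$ is a tree and each $B_x\subseteq V(\Gamma)$, such that every edge of $\Gamma$ is contained in some $B_x$, and for each vertex $v$ of $\Gamma$ the set $\{x\in V(T): v\in B_x\}$ is non-empty and induces a connected subgraph of $T$. Its width is $\max_x |B_x|-1$, and the treewidth $\operatorname{tw}(\Gamma)$ is the minimum width of a tree decomposition of $\Gamma$. *)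

(* Defs.v *)
From mathcomp Require Import all_boot.
Set Implicit Arguments. Unset Strict Implicit. Unset Printing Implicit Defensive.

(* Generalized Kneser graph K(n,k,t): vertices are k-subsets of [n]
   (modelled as {set 'I_n} of cardinality k), adjacent iff |K :&: K'| < t. *)
Definition kvertex (n k : nat) := {A : {set 'I_n} | #|A| == k}.

Definition kneser_adj (n k t : nat) : rel (kvertex n k) :=
  fun K K' => #|val K :&: val K'| < t.

Definition n_edges (T : finType) (e : rel T) : nat :=
  #|[set p : T * T | e p.1 p.2]| %/ 2.

Definition is_tree (T : finType) (e : rel T) : Prop :=
  [/\ irreflexive e, symmetric e, 0 < #|T|,
      (forall x y : T, connect e x y) & n_edges e = #|T| - 1].

Definition induces_connected (T : finType) (e : rel T) (S : {set T}) : Prop :=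
  S != set0 /\
  forall x y, x \in S -> y \in S ->
    connect [rel a b | [&& e a b, a \in S & b \in S]] x y.

Definition tree_decomposition (V : finType) (adj : rel V)
    (T : finType) (te : rel T) (B : T -> {set V}) : Prop :=
  [/\ is_tree te,
      (forall u v : V, adj u v -> exists x : T, (u \in B x) && (v \in B x)) &
      (forall v : V, induces_connected te [set x | v \in B x])].

Definition td_width (V T : finType) (B : T -> {set V}) : nat :=
  (\max_(x : T) #|B x|) - 1.

(* tw(G) < b  unfolds to: some tree decomposition of G has width < b.
   Tree index sets are taken to be ordinal types 'I_m (any finite tree is
   isomorphic to one of these). *)
Definition treewidth_lt (V : finType) (adj : rel V) (b : nat) : Prop :=
  exists (m : nat) (te : rel 'I_m) (B : 'I_m -> {set V}),
    tree_decomposition adj te B /\ td_width B < b.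

(* Main.v *)
Require Import Defs.
From mathcomp Require Import all_boot zify.
Set Implicit Arguments. Unset Strict Implicit. Unset Printing Implicit Defensive.


Section Comb.
Variable T : finType.

Lemma sub_card (A : {set T}) m : m <= #|A| -> exists2 B : {set T}, B \subset A & #|B| = m.
Proof.
move=> hm; exists [set x in take m (enum A)].
  by apply/subsetP=> x; rewrite inE => /mem_take; rewrite mem_enum.
rewrite cardsE (card_uniqP _); last by rewrite take_uniq // enum_uniq.
by rewrite size_take -cardE; case: ltnP hm => // h1 h2; apply/eqP; rewrite eqn_leq h1 h2.
Qed.

Lemma pattern_count (P Q : {set T}) m : Q \subset P ->
  #|[set K : {set T} | (K :&: P == Q) && (#|K| == #|Q| + m)]| = 'C(#|~: P|, m).
Proof.
move=> QP.
have -> : [set K : {set T} | (K :&: P == Q) && (#|K| == #|Q| + m)] =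
   (fun R => Q :|: R) @: [set R : {set T} | R \subset ~: P & #|R| == m].
  apply/setP=> K; rewrite inE; apply/andP/imsetP.
    move=> [/eqP KP /eqP cK]; exists (K :&: ~: P).
      rewrite inE subsetIr /=; move: (cardsID P K); rewrite KP cK setDE.
      by move=> h; apply/eqP; apply/eqP; rewrite -(eqn_add2l #|Q|) h.
    by rewrite -KP -setIUr setUCr setIT.
  move=> [R]; rewrite inE => /andP [RP /eqP cR] ->.
  have dj : [disjoint Q & R].
    by rewrite -setI_eq0 -subset0; apply/subsetP=> x; rewrite !inE => /andP[/(subsetP QP) xP /(subsetP RP)]; rewrite inE xP.
  rewrite cardsU (disjoint_setI0 dj) cards0 subn0 cR eqxx; split=> //.
  rewrite setIUl (setIidPl QP).
  have -> : R :&: P = set0 by apply/setP=> x; rewrite !inE; apply/negP => /andP[/(subsetP RP)]; rewrite inE => /negP.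
  by rewrite setU0.
rewrite card_in_imset ?cards_draws //.
move=> R1 R2; rewrite !inE => /andP[R1P _] /andP[R2P _] e.
have h : forall R : {set T}, R \subset ~: P -> (Q :|: R) :&: ~: P = R.
  move=> R RP; rewrite setIUl (setIidPl RP).
  have -> : Q :&: ~: P = set0 by apply/setP=> x; rewrite !inE; apply/negP => /andP[/(subsetP QP) ->].
  by rewrite set0U.
by rewrite -(h _ R1P) -(h _ R2P) e.
Qed.

Lemma setIP_out (P R : {set T}) : R \subset ~: P -> R :&: P = set0.
Proof.
move=> RP; apply/setP=> x; rewrite !inE; apply/negP => /andP[/(subsetP RP)]; rewrite inE => /negP; auto.
Qed.

Lemma pair_count (P T0 : {set T}) m : T0 \subset P ->
  #|T0| * 'C(#|~:P|, m) <= #|[set K : {set T} | [&& #|K :&: P| == #|P|.-1, ~~ (T0 \subset K) & #|K| == #|P|.-1 + m]]|.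
Proof.
move=> TP.
set D := [set R : {set T} | R \subset ~: P & #|R| == m].
set f := fun p : T * {set T} => (P :\ p.1) :|: p.2.
have key : forall p, p \in setX T0 D -> ((f p) :&: P = P :\ p.1) /\ (f p) :&: ~: P = p.2.
  move=> [i R]; rewrite !inE /= => /andP[iT /andP[RP _]]; rewrite /f /=.
  rewrite !setIUl (setIP_out RP) setU0 (setIidPl (subsetDl _ _)) (setIidPl RP); split=> //.
  have -> : (P :\ i) :&: ~: P = set0 by apply/setP=> x; rewrite !inE; case: (x \in P); rewrite ?andbF.
  by rewrite set0U.
have <- : #|f @: setX T0 D| = #|T0| * 'C(#|~:P|, m).
  rewrite card_in_imset ?cardsX ?cards_draws //.
  move=> [i1 R1] [i2 R2] h1 h2 e.
  have [k1 k1'] := key _ h1; have [k2 k2'] := key _ h2.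
  move: h1 h2; rewrite !inE /= => /andP[i1T _] /andP[i2T _].
  have i1P := subsetP TP _ i1T; have i2P := subsetP TP _ i2T.
  have ei : i1 = i2.
    apply/eqP; apply/negPn/negP => ne.
    have : i1 \in P :\ i2 by rewrite !inE ne i1P.
    by rewrite -k2 -e k1 !inE eqxx.
  by move: k1'; rewrite e k2' /= => ->; rewrite ei.
apply: subset_leq_card; apply/subsetP=> K /imsetP[[i R] hp ->].
have [k1 k2] := key _ hp.
move: hp; rewrite !inE /= => /andP[iT /andP[RP /eqP cR]].
have iP := subsetP TP _ iT.
have cPi : #|P :\ i| = #|P|.-1 by rewrite (cardsD1 i P) iP.
rewrite k1 cPi eqxx /=.
apply/andP; split.
  apply/negP => /subsetP /(_ i iT); rewrite /f /= !inE eqxx /= => /(subsetP RP); by rewrite inE iP.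
change (#|(P :\ i) :|: R| == #|P|.-1 + m); rewrite cardsU cR -cPi.
suff -> : (P :\ i) :&: R = set0 by rewrite cards0 subn0.
apply/setP => x; rewrite !inE; case xR: (x \in R); rewrite ?andbF // andbT; move: (subsetP RP x xR); rewrite inE; by case: (x \in P); rewrite ?andbF.
Qed.
End Comb.

Lemma star_td (V : finType) (adj : rel V) (I : {set V}) (b : nat) :
  symmetric adj -> (forall u v, u \in I -> v \in I -> ~~ adj u v) ->
  #|~: I| <= b -> (forall v, #|v |: [set w | adj v w]| <= b) -> 0 < b ->
  treewidth_lt adj b.
Proof.
move=> sym indep hc hl hb.
pose m := #|V|.+1.
pose c : 'I_m := ord0.
pose te : rel 'I_m := fun x y => (x == c) != (y == c).
pose B (x : 'I_m) : {set V} := match unlift c x with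
  | None => ~: I
  | Some j => let w := enum_val j in if w \in I then w |: [set u | adj w u] else set0 end.
pose node (w : V) : 'I_m := lift c (enum_rank w).
have Bnode : forall w, B (node w) = if w \in I then w |: [set u | adj w u] else set0.
  by move=> w; rewrite /B /node liftK /= enum_rankK.
have tec : forall x, x != c -> te x c && te c x.
  by move=> x /negbTE xc; rewrite /te xc eqxx.
exists m, te, B; split; last first.
  rewrite /td_width.
  have hmax : \max_(x : 'I_m) #|B x| <= b.
    apply/bigmax_leqP => x _; rewrite /B; case: unliftP => [j _|_] //.
    by case: ifP => _ //; rewrite cards0.
  apply: leq_ltn_trans (leq_sub2r 1 hmax) _; lia.
split.
- split.
  + by move=> x; rewrite /te eqxx.
  + by move=> x y; rewrite /te eq_sym.
  + by rewrite card_ord.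
  + move=> x y; apply: (connect_trans (y:=c)).
      case: (eqVneq x c) => [->|xc]; first exact: connect0.
      by apply: connect1; case/andP: (tec x xc).
    case: (eqVneq y c) => [->|yc]; first exact: connect0.
    by apply: connect1; case/andP: (tec y yc).
  + rewrite /n_edges card_ord.
    have -> : [set p : 'I_m * 'I_m | te p.1 p.2] =
       setX [set c] (~: [set c]) :|: setX (~: [set c]) [set c].
      apply/setP => [[x y]]; rewrite !inE /te /=.
      by case: (x == c); case: (y == c).
    rewrite cardsU !cardsX !cards1 cardsC1 card_ord.
    have -> : setX [set c] (~: [set c]) :&: setX (~: [set c]) [set c] = set0.
      apply/setP => [[x y]]; rewrite !inE /=.
      by rewrite andbC; case: (x == c); rewrite /= ?andbF.
    rewrite cards0 subn0 mul1n muln1 addnn -muln2 mulnK //. by rewrite subn1.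
- move=> u v a.
  case uI: (u \in I).
    by exists (node u); rewrite Bnode uI !inE eqxx /= a orbT.
  case vI: (v \in I).
    by exists (node v); rewrite Bnode vI !inE eqxx sym a orbT.
  by exists c; rewrite /B unlift_none !inE uI vI.
- move=> v.
  case vI: (v \in I).
    have hS : [set x | v \in B x] = [set node v].
      apply/setP => x; rewrite !inE; apply/idP/idP; last first.
        by move/eqP ->; rewrite Bnode vI !inE eqxx.
      rewrite /B; case: unliftP => [j ->|_]; last by rewrite inE vI.
      case: ifP => wI; last by rewrite inE.
      rewrite !inE => /orP[/eqP ->|a]; first by rewrite /node enum_valK.
      by move: (indep _ _ wI vI); rewrite a.
    rewrite hS; split; first by apply/set0Pn; exists (node v); rewrite inE.
    by move=> x y; rewrite !inE => /eqP -> /eqP ->; exact: connect0.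
  have cS : c \in [set x | v \in B x] by rewrite inE /B unlift_none inE vI.
  split; first by apply/set0Pn; exists c.
  set S := [set x | v \in B x].
  have h : forall x, x \in S -> connect [rel a b | [&& te a b, a \in S & b \in S]] x c /\
                                connect [rel a b | [&& te a b, a \in S & b \in S]] c x.
    move=> x xS; case: (eqVneq x c) => [->|xc]; first by split; exact: connect0.
    case/andP: (tec x xc) => t1 t2.
    by split; apply: connect1; rewrite /= ?t1 ?t2 xS cS.
  move=> x y xS yS; apply: (connect_trans (proj1 (h x xS)) (proj2 (h y yS))).
Qed.

Lemma card_kvtx n k : #|{: kvertex n k}| = 'C(n,k).
Proof.
rewrite card_sig -[n in 'C(n,_)]card_ord -card_draws cardsE; apply: eq_card => A; by rewrite !inE.
Qed.

Lemma card_lift n k (F : {set {set 'I_n}}) : (forall K, K \in F -> #|K| = k) ->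
  #|[set w : kvertex n k | val w \in F]| = #|F|.
Proof.
move=> hF; rewrite -(card_imset _ val_inj); apply: eq_card => K.
apply/imsetP/idP => [[w]|KF]; first by rewrite inE => wF ->.
have cK : #|K| == k by rewrite hF.
by exists (exist _ K cK); rewrite // inE.
Qed.

Lemma arith (x1 x2 x3 x4 t : nat): t < x1 -> t < x2 -> x3 <= t.+2 -> x3 + x4 = x1 + x2 -> t <= x4.
Proof. lia. Qed.

Section Main.
Variables n k t : nat.
Hypotheses (t0 : 0 < t) (tk : t < k) (h1 : 2*k - t < n) (h2 : n < (t+1)*(k+1-t)).

Lemma fam_I : exists I : {set kvertex n k},
  (forall u v, u \in I -> v \in I -> ~~ @kneser_adj n k t u v) /\ 'C(n-t, k-t) < #|I|.
Proof.
have [P _ cP] : exists2 P : {set 'I_n}, P \subset [set: 'I_n] & #|P| = t.+2.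
  by apply: sub_card; rewrite cardsT card_ord; lia.
have [Tt TP cT] : exists2 Tt : {set 'I_n}, Tt \subset P & #|Tt| = t.
  by apply: sub_card; rewrite cP; lia.
have cTc : #|~: Tt| = n - t by move: (cardsC Tt); rewrite card_ord cT; lia.
have cPc : #|~: P| = n - t - 2 by move: (cardsC P); rewrite card_ord cP; lia.
set Ifam := [set K : {set 'I_n} | (#|K| == k) && (t.+1 <= #|K :&: P|)].
set Sfam := [set K : {set 'I_n} | (K :&: Tt == Tt) && (#|K| == #|Tt| + (k-t))].
set Xfam := [set K : {set 'I_n} | (K :&: P == Tt) && (#|K| == #|Tt| + (k-t))].
set Yfam := [set K : {set 'I_n} | [&& #|K :&: P| == #|P|.-1, ~~ (Tt \subset K) & #|K| == #|P|.-1 + (k-t-1)]].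
have cS : #|Sfam| = 'C(n-t, k-t) by rewrite pattern_count // cTc.
have cX : #|Xfam| = 'C(n-t-2, k-t) by rewrite pattern_count // cPc.
have cY : t * 'C(n-t-2, k-t-1) <= #|Yfam| by have := pair_count (k-t-1) TP; rewrite cT cPc.
have YI : Yfam \subset Ifam :\: Sfam.
  apply/subsetP => K; rewrite !inE cP /= => /and3P[/eqP c1 nT /eqP c2].
  rewrite c1 leqnn andbT.
  apply/andP; split; last by apply/eqP; rewrite c2; lia.
  by apply/negP => /andP[/eqP e _]; move: nT; rewrite -e subsetIl.
have SX : Sfam :\: Ifam \subset Xfam.
  apply/subsetP => K; rewrite !inE cT => /andP[hI /andP[/eqP e1 /eqP c1]].
  rewrite c1 eqxx andbT; move: hI; rewrite c1.
  have -> : t + (k - t) == k by apply/eqP; lia.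
  rewrite /= -leqNgt => c3.
  rewrite eq_sym eqEcard cT c3 andbT subsetI TP andbT.
  by rewrite -e1 subsetIl.
have ineq : 'C(n-t-2, k-t) < t * 'C(n-t-2, k-t-1).
  have key : forall N a, a <= N -> N - a < t * a.+1 -> 'C(N, a.+1) < t * 'C(N, a).
    move=> N a aN h.
    rewrite -(ltn_pmul2l (ltn0Sn a)) mul_bin_left mulnCA mulnA ltn_pmul2r //.
      by rewrite bin_gt0.
  have -> : 'C(n-t-2, k-t) = 'C(n-t-2, (k-t-1).+1) by congr 'C(_,_); lia.
  apply: key; nia.
exists [set w : kvertex n k | val w \in Ifam]; split.
  move=> u v; rewrite !inE => /andP[/eqP cu hu] /andP[/eqP cv hv].
  rewrite /kneser_adj -leqNgt.
  have := cardsUI (val u :&: P) (val v :&: P).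
  have hU : #|(val u :&: P) :|: (val v :&: P)| <= t.+2.
    rewrite -cP; apply: subset_leq_card; rewrite subUset !subsetIr //.
  have hI : #|(val u :&: P) :&: (val v :&: P)| <= #|val u :&: val v|.
    by apply: subset_leq_card; rewrite setIACA subsetIl.
  move=> hUI; apply: leq_trans _ hI; exact: (arith hu hv hU hUI).
rewrite card_lift; last by move=> K; rewrite inE => /andP[/eqP].
have e1 := cardsID Sfam Ifam.
have e2 := cardsID Ifam Sfam.
have l1 := subset_leq_card YI.
have l2 := subset_leq_card SX.
rewrite setIC in e2.
rewrite -cS -e2 -e1 ltn_add2l; apply: (leq_ltn_trans l2); rewrite cX; apply: (leq_trans ineq); exact: (leq_trans cY l1).
Qed.

Lemma share_t (A K S : {set 'I_n}) : S \subset A -> S \subset K -> #|S| = t -> t <= #|A :&: K|.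
Proof. by move=> SA SK <-; apply: subset_leq_card; rewrite subsetI SA SK. Qed.

Lemma leaf_bound (v : kvertex n k) :
  #|v |: [set w | @kneser_adj n k t v w]| + 'C(n-t,k-t) + 1 <= #|{: kvertex n k}|.
Proof.
have cv : #|val v| = k by apply/eqP; exact: (valP v).
have [P' P'v cP'] : exists2 P' : {set 'I_n}, P' \subset val v & #|P'| = t.+1.
  by apply: sub_card; rewrite cv.
have [T0 T0P cT0] : exists2 T0 : {set 'I_n}, T0 \subset P' & #|T0| = t.
  by apply: sub_card; rewrite cP'.
have [x xT] : exists x, x \in T0 by apply/card_gt0P; rewrite cT0.
have xP := subsetP T0P x xT.
have cQ : #|P' :\ x| = t by move: (cardsD1 x P'); rewrite xP cP'; lia.
have cT0c : #|~: T0| = n - t by move: (cardsC T0); rewrite card_ord cT0; lia.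
have cP'c : #|~: P'| = n - t - 1 by move: (cardsC P'); rewrite card_ord cP'; lia.
set F1 := [set K : {set 'I_n} | (K :&: T0 == T0) && (#|K| == #|T0| + (k-t))].
set F2 := [set K : {set 'I_n} | (K :&: P' == P' :\ x) && (#|K| == #|P' :\ x| + (k-t))].
have c1 : #|F1| = 'C(n-t,k-t) by rewrite pattern_count // cT0c.
have c2 : #|F2| = 'C(n-t-1,k-t) by rewrite pattern_count ?subsetDl // cP'c.
have c2' : 2 <= 'C(n-t-1,k-t).
  have -> : 'C(n-t-1,k-t) = 'C((n-t-2).+1,(k-t-1).+1) by congr 'C(_,_); lia.
  rewrite binS.
  have a1 : 0 < 'C(n - t - 2, (k - t - 1).+1) by rewrite bin_gt0; lia.
  have a2 : 0 < 'C(n - t - 2, k - t - 1) by rewrite bin_gt0; lia.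
  lia.
have dis : F1 :&: F2 = set0.
  apply/setP => K; rewrite !inE; apply/negP => /andP[/andP[/eqP e1 _] /andP[/eqP e2 _]].
  have xK : x \in K by move: xT; rewrite -e1 inE => /andP[].
  have : x \in K :&: P' by rewrite inE xK xP.
  by rewrite e2 !inE eqxx.
have cU : #|F1 :|: F2| = #|F1| + #|F2| by rewrite -cardsUI dis cards0 addn0.
have cD : #|F1 :|: F2| <= #|(F1 :|: F2) :\ val v| + 1.
  by rewrite (cardsD1 (val v) (F1 :|: F2)); case: (_ \in _); rewrite /= ?add0n ?add1n //; lia.
set Z := [set w : kvertex n k | val w \in (F1 :|: F2) :\ val v].
have cZ : #|Z| = #|(F1 :|: F2) :\ val v|.
  apply: card_lift => K; rewrite !inE => /andP[_ /orP[]] /andP[_ /eqP ->]; [rewrite cT0|rewrite cQ]; lia.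
have sub : v |: [set w | @kneser_adj n k t v w] \subset ~: Z.
  apply/subsetP => w; rewrite !inE => /orP[/eqP ->|a]; first by rewrite eqxx.
  apply/negP => /andP[_ /orP[]] /andP[/eqP e _]; move: a; rewrite /kneser_adj ltnNge; apply/negP/negPn.
    apply: (share_t (S := T0)); rewrite ?cT0 //; first exact: subset_trans T0P P'v.
    by rewrite -e subsetIl.
  apply: (share_t (S := P' :\ x)); rewrite ?cQ //; first exact: subset_trans (subsetDl _ _) P'v.
  by rewrite -e subsetIl.
have := subset_leq_card sub.
have := cardsC Z.
move=> h3 h4; clearbody Z F1 F2; apply: leq_trans (eq_leq h3); lia.
Qed.
End Main.

Lemma ar2 x c N : x + c + 1 <= N -> x <= N - c - 1. Proof. lia. Qed.
Lemma ar3 x c N : 0 < x -> x + c + 1 <= N -> 0 < N - c - 1. Proof. lia. Qed.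

Theorem mainTheorem2 (n k t : nat) :
  0 < t -> t < k -> 2 * k - t < n -> n < (t + 1) * (k + 1 - t) ->
  treewidth_lt (@kneser_adj n k t) ('C(n, k) - 'C(n - t, k - t) - 1).
Proof.
move=> t0 tk h1 h2.
have [I [indep cI]] := fam_I t0 tk h1 h2.
have cV := card_kvtx n k.
have hl := leaf_bound t0 tk h1 h2.
have [v vI] : exists v, v \in I by apply/card_gt0P; lia.
have hv := hl v.
have b1 : 0 < #|v |: [set w | @kneser_adj n k t v w]|.
  by apply/card_gt0P; exists v; rewrite !inE eqxx.
apply: (star_td (I:=I)).
- by move=> u w; rewrite /kneser_adj setIC.
- exact: indep.
- have hc : #|I| + #|~: I| = 'C(n,k) by rewrite -cV; exact: cardsC.
  lia.
- by move=> w; apply: ar2; rewrite -cV; apply: hl.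
- by apply: (ar3 b1); rewrite -cV.
Qed.
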